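(* Let $w,z\in\mathbb A$ with $w\ne0$ and $w,z$ relatively prime in $\mathbb A$, put $\theta=z/w$ and $W=\mathcal N(w)$, and suppose $c\ge1$ is such that $c^{-1}\sqrt W\le|\sigma_i(w)|\le c\sqrt W$ for $i=1,2$. Then there is a constant $c'>0$ depending only on $q$, $d$ and $c$ such that for every $k\in\mathbb A$ with $0<\mathcal N(k)<W$, $$\max\{\|\Re(k\theta)\|,\ \|\Im(k\theta)\|\}\ge c'\,W^{-1/2}.$$
   Context: $q$ is an odd prime power, $d\in\mathbb{F}_q[T]$ monic, square-free, of even degree, $\sqrt d\in k_\infty=\mathbb{F}_q((1/T))$ a fixed square root, $|\cdot|$ the absolute value on $k_\infty$ with $|\sum_{i\le n}a_iT^i|=q^n$ ($a_n\ne0$). $K=\mathbb{F}_q(T)(\sqrt d)$, $\mathbb A=\mathbb{F}_q[T][\sqrt d]$, $\sigma_1(a+b\sqrt d)=a+b\sqrt d$, $\sigma_2(a+b\sqrt d)=a-b\sqrt d$ for $a,b\in k$, $\mathcal N(w)=|\sigma_1(w)\sigma_2(w)|$. For $f=a+b\sqrt d\in K$ with $a,b\in k$: $\Re(f)=a$, $\Im(f)=b$. For $x\in k_\infty$, $\|x\|=\inf_{r\in\mathbb{F}_q[T]}|x-r|$ (the absolute value of the fractional part of $x$). *)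

(* Defs.v *)
From HB Require Import structures.
From mathcomp Require Import all_boot all_order all_algebra.
From mathcomp Require Import fraction boolp classical_sets reals.
Set Implicit Arguments. Unset Strict Implicit. Unset Printing Implicit Defensive.
Import Order.TTheory GRing.Theory Num.Theory.
Local Open Scope ring_scope.
Local Open Scope classical_set_scope.

Notation "x %:F" := (@FracField.tofrac _ x) : ring_scope.

(* k_infty = F((1/T)) : Laurent series sum_{i <= N} a_i T^i, stored    *)
(* as a coefficient function int -> F together with an upper bound N   *)
(* on its support.                                                     *)
Record laurent (F : fieldType) := Laurent {
  lcoef :> int -> F ;
  lbd : int ;
  lbdP : forall n : int, lbd < n -> lcoef n = 0 }.

Section Laurent.
Variable F : fieldType.

Definition lpoly_coef (p : {poly F}) (n : int) : F :=
  match n with Posz m => p`_m | Negz _ => 0 end.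
Lemma lpoly_bdP (p : {poly F}) (n : int) :
  (size p)%:Z < n -> lpoly_coef p n = 0.
Proof.
case: n => [m|m] //= hm; rewrite nth_default //.
by move: hm; rewrite ltz_nat => /ltnW.
Qed.
Definition lpoly (p : {poly F}) : laurent F :=
  Laurent (@lpoly_bdP p).

Lemma ladd_bdP (x y : laurent F) (n : int) :
  (Order.max (lbd x) (lbd y) < n)%R -> x n + y n = 0.
Proof.
rewrite gt_max => /andP[hx hy]; by rewrite (lbdP hx) (lbdP hy) addr0.
Qed.
Definition ladd (x y : laurent F) : laurent F :=
  @Laurent F (fun n => x n + y n) (Order.max (lbd x) (lbd y)) (@ladd_bdP x y).

(* multiplication (Cauchy product; each coefficient is a finite sum:
   (xy)_n = sum_{i = n - lbd y}^{lbd x} x_i y_(n-i)) *)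
Definition lmul_coef (x y : laurent F) (n : int) : F :=
  if n <= lbd x + lbd y then
    \sum_(k < (absz (lbd x + lbd y - n)%R).+1)
       x (n - lbd y + k%:Z) * y (lbd y - k%:Z)
  else 0.
Lemma lmul_bdP (x y : laurent F) (n : int) :
  lbd x + lbd y < n -> lmul_coef x y n = 0.
Proof. by rewrite /lmul_coef ltNge => /negbTE ->. Qed.
Definition lmul (x y : laurent F) : laurent F :=
  @Laurent F (lmul_coef x y) (lbd x + lbd y) (@lmul_bdP x y).

Definition leq_ls (x y : laurent F) : Prop := forall n, x n = y n.
End Laurent.

Definition sqfree_poly (F : fieldType) (d : {poly F}) : Prop :=
  forall p : {poly F}, p ^+ 2 %| d -> (size p <= 1)%N.

Section Values.
Variables (F : finFieldType) (R : realType).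

Definition qR : R := (#|F|%:R : R).

(* |sum_{i<=n} a_i T^i| = q^n (a_n <> 0), |0| = 0 *)
Definition labs (x : laurent F) : R :=
  sup [set qR ^ n | n in [set n : int | x n != 0]].

Definition kabs (x : {fraction {poly F}}) : R :=
  let r := repr x in
  if \n_r == 0 then 0
  else qR ^ ((size \n_r)%:Z - (size \d_r)%:Z).

Definition kdist (x : {fraction {poly F}}) : R :=
  inf [set kabs (x - r%:F) | r in [set: {poly F}]].
End Values.

(* K = k(sqrt d) as pairs (a, b) <-> a + b sqrt d, a b in k,           *)
(* and the order A = F[T][sqrt d] as pairs of polynomials.             *)
Section Quadratic.
Variables (F : finFieldType) (R : realType) (d : {poly F}).

Definition Kelt := ({fraction {poly F}} * {fraction {poly F}})%type.
Definition Aelt := ({poly F} * {poly F})%type.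

Definition Kmul (x y : Kelt) : Kelt :=
  (x.1 * y.1 + x.2 * y.2 * d%:F, x.1 * y.2 + x.2 * y.1).
Definition Kinv (x : Kelt) : Kelt :=
  let nm := x.1 ^+ 2 - x.2 ^+ 2 * d%:F in (x.1 / nm, - x.2 / nm).
Definition Kdiv (x y : Kelt) : Kelt := Kmul x (Kinv y).
Definition KRe (x : Kelt) := x.1.
Definition KIm (x : Kelt) := x.2.

Definition AtoK (w : Aelt) : Kelt := (w.1%:F, w.2%:F).
Definition Amul (x y : Aelt) : Aelt :=
  (x.1 * y.1 + x.2 * y.2 * d, x.1 * y.2 + x.2 * y.1).
Definition Aadd (x y : Aelt) : Aelt := (x.1 + y.1, x.2 + y.2).

Definition Acoprime (w z : Aelt) : Prop :=
  exists u v : Aelt, Aadd (Amul u w) (Amul v z) = (1, 0).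

(* the two embeddings A -> k_infty, given sd with sd^2 = d in k_infty *)
Definition sigma1 (sd : laurent F) (w : Aelt) : laurent F :=
  ladd (lpoly w.1) (lmul (lpoly w.2) sd).
Definition sigma2 (sd : laurent F) (w : Aelt) : laurent F :=
  ladd (lpoly w.1) (lmul (lpoly (- w.2)) sd).
Definition sigma (sd : laurent F) (i : 'I_2) (w : Aelt) : laurent F :=
  if val i == 0%N then sigma1 sd w else sigma2 sd w.

Definition Anorm (sd : laurent F) (w : Aelt) : R :=
  labs R (lmul (sigma1 sd w) (sigma2 sd w)).
End Quadratic.

(* Main.v *)
Require Import Defs.
From HB Require Import structures.
From mathcomp Require Import all_boot all_order all_algebra.
From mathcomp Require Import fraction boolp classical_sets reals.
From mathcomp Require Import zify ring lra generic_quotient.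
Import Order.TTheory GRing.Theory Num.Theory.
Local Open Scope ring_scope.

Module Aux.
Set Implicit Arguments. Unset Strict Implicit. Unset Printing Implicit Defensive.



Section Lau.
Variable F : fieldType.
Implicit Types x y z : laurent F.

Definition wsum (f : int -> F) (a : int) (N : nat) := \sum_(k < N) f (a + k%:Z).

Lemma wsum_split f a (s N : nat) :
  wsum f a (s + N) = wsum f a s + wsum f (a + s%:Z) N.
Proof.
rewrite /wsum big_split_ord /=; congr (_ + _).
by apply: eq_bigr => k _; rewrite /= PoszD addrA.
Qed.

Lemma wsum0 f a N : (forall k : nat, (k < N)%N -> f (a + k%:Z) = 0) -> wsum f a N = 0.
Proof. by move=> h; rewrite /wsum big1 // => k _; apply: h. Qed.

Lemma wsum_ext (f : int -> F) (a : int) N (A E : int) : A <= a -> a + N%:Z <= E ->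
  (forall i, f i != 0 -> a <= i < a + N%:Z) ->
  wsum f a N = wsum f A (absz (E - A)).
Proof.
move=> hA hE hs.
have eE : absz (E - A) = (absz (a - A)%R + (N + absz (E - a - N%:Z)%R))%N by lia.
rewrite eE wsum_split [wsum f A _]wsum0; last first.
  move=> k hk; apply/eqP/negP => /negP /hs; lia.
rewrite wsum_split [X in _ = _ + (_ + X)]wsum0; last first.
  move=> k hk; apply/eqP/negP => /negP /hs; lia.
rewrite add0r addr0; congr wsum; lia.
Qed.

Lemma wsum_eq (f : int -> F) (a : int) N (a' : int) N' :
  (forall i, f i != 0 -> (a <= i < a + N%:Z) && (a' <= i < a' + N'%:Z)) ->
  wsum f a N = wsum f a' N'.
Proof.
move=> hs.
rewrite (@wsum_ext f a N (Order.min a a') (Order.max (a + N%:Z) (a' + N'%:Z))).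
- rewrite (@wsum_ext f a' N' (Order.min a a') (Order.max (a + N%:Z) (a' + N'%:Z))) //.
  + by rewrite ge_min lexx orbT.
  + by rewrite le_max lexx orbT.
  + by move=> i /hs /andP[].
- by rewrite ge_min lexx.
- by rewrite le_max lexx.
- by move=> i /hs /andP[].
Qed.

Lemma lcoef0 x (n : int) : lbd x < n -> x n = 0.
Proof. exact: lbdP. Qed.

Lemma lmul_supp x y (n i : int) : x i * y (n - i) != 0 -> (n - lbd y <= i) && (i <= lbd x).
Proof.
rewrite mulf_eq0 negb_or => /andP[hx hy].
apply/andP; split.
  by apply/negP => h; move: hy; rewrite lcoef0 ?eqxx //; lia.
by apply/negP => h; move: hx; rewrite lcoef0 ?eqxx //; lia.
Qed.

Lemma lmul_win x y (n a : int) N :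
  (forall i, x i * y (n - i) != 0 -> a <= i < a + N%:Z) ->
  lmul x y n = wsum (fun i => x i * y (n - i)) a N.
Proof.
move=> hw; rewrite /= /lmul_coef; case: ifP => h.
  transitivity (wsum (fun i => x i * y (n - i)) (n - lbd y)
     (absz (lbd x + lbd y - n)%R).+1).
    by apply: eq_bigr => k _; congr (_ * y _); lia.
  apply: wsum_eq => i hi; have := lmul_supp hi; have := hw _ hi; lia.
symmetry; apply: wsum0 => k hk; apply/eqP/negP => /negP /lmul_supp; lia.
Qed.


Lemma lmul_win' x y (n a : int) N : a <= n - lbd y -> lbd x < a + N%:Z ->
  lmul x y n = wsum (fun i => x i * y (n - i)) a N.
Proof. move=> h1 h2; apply: lmul_win => i /lmul_supp; lia. Qed.

Lemma lmul_congr x x' y y' : leq_ls x x' -> leq_ls y y' -> leq_ls (lmul x y) (lmul x' y').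
Proof.
move=> hx hy n.
rewrite (@lmul_win' x y n (n - lbd y) (absz (lbd x - (n - lbd y))%R).+1); try lia.
rewrite (@lmul_win x' y' n (n - lbd y) (absz (lbd x - (n - lbd y))%R).+1).
  by apply: eq_bigr => k _; rewrite hx hy.
by move=> i; rewrite -hx -hy => /lmul_supp; lia.
Qed.

Lemma lmulC x y : leq_ls (lmul x y) (lmul y x).
Proof.
move=> n; set a := n - lbd y; set N := (absz (lbd x - a)%R).+1.
rewrite (@lmul_win' x y n a N); try lia.
rewrite (@lmul_win' y x n (n - a - N%:Z + 1) N); try lia.
rewrite /wsum (reindex_inj rev_ord_inj) /=.
apply: eq_bigr => k _; rewrite mulrC; congr (y _ * x _).
  have := ltn_ord k; rewrite -subzn //; lia.
have := ltn_ord k; rewrite -subzn //; lia.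
Qed.

Lemma lmulDl x y z : leq_ls (lmul (ladd x y) z) (ladd (lmul x z) (lmul y z)).
Proof.
move=> n; set a := n - lbd z; set N := (absz (lbd x - a)%R + absz (lbd y - a)%R).+1.
change (lmul (ladd x y) z n = lmul x z n + lmul y z n).
rewrite (@lmul_win' x z n a N); try lia.
rewrite (@lmul_win' y z n a N); try lia.
rewrite (@lmul_win (ladd x y) z n a N).
  by rewrite /wsum -big_split /=; apply: eq_bigr => k _; rewrite mulrDl.
move=> i; rewrite mulrDl => hi.
have [h1|h1] := eqVneq (x i * z (n - i)) 0; last by move/lmul_supp: h1; lia.
have h2 : y i * z (n - i) != 0 by move: hi; rewrite h1 add0r.
by move/lmul_supp: h2; lia.
Qed.

Lemma lmulA x y z : leq_ls (lmul (lmul x y) z) (lmul x (lmul y z)).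
Proof.
move=> n; set a := n - lbd z; set b := a - lbd y.
set M := (absz (lbd x - b)%R).+1; set N := (absz (lbd x + lbd y - a)%R + M)%N.
rewrite (@lmul_win' (lmul x y) z n a N); try (simpl; lia).
rewrite (@lmul_win' x (lmul y z) n b M); try (simpl; lia).
rewrite /wsum.
transitivity (\sum_(k < N) \sum_(j < M)
   x (b + j%:Z) * y (a + k%:Z - (b + j%:Z)) * z (n - (a + k%:Z))).
  apply: eq_bigr => k _.
  rewrite (@lmul_win' x y (a + k%:Z) b M); try (simpl; lia).
  by rewrite /wsum mulr_suml.
rewrite exchange_big /=; apply: eq_bigr => j _.
rewrite -[lmul_coef y z _]/(lcoef (lmul y z) _).
rewrite (@lmul_win' y z (n - (b + j%:Z)) (a - b - j%:Z) N); try (have := ltn_ord j; simpl; lia).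
rewrite /wsum mulr_sumr; apply: eq_bigr => k _.
rewrite mulrA; congr (_ * y _ * z _); lia.
Qed.

Lemma lmul_lpoly (p q : {poly F}) : leq_ls (lmul (lpoly p) (lpoly q)) (lpoly (p * q)).
Proof.
have supp (r : {poly F}) (i : int) : lpoly r i != 0 -> 0 <= i.
  by case: i => [m|m] /=; rewrite ?eqxx.
move=> [m|m].
  rewrite (@lmul_win _ _ _ 0 m.+1); last first.
    move=> i; rewrite mulf_eq0 negb_or => /andP[/supp h1 /supp h2]; lia.
  rewrite /wsum /= coefM; apply: eq_bigr => k _.
  by rewrite add0n subzn ?add0n //= -ltnS.
rewrite (@lmul_win (lpoly p) (lpoly q) (Negz m) 0 0) ?/wsum ?big_ord0 //.
move=> i; rewrite mulf_eq0 negb_or => /andP[/supp h1 /supp h2]; lia.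
Qed.

Lemma lpolyD (p q : {poly F}) (n : int) : lpoly (p + q) n = lpoly p n + lpoly q n.
Proof. by case: n => m /=; rewrite ?coefD ?addr0. Qed.

Lemma lmul0 x y n : (forall i, x i = 0) -> lmul x y n = 0.
Proof.
move=> h; rewrite (@lmul_win _ _ _ 0 0) ?/wsum ?big_ord0 //.
by move=> i; rewrite h mul0r eqxx.
Qed.

End Lau.

Section Sig.
Variables (F : finFieldType) (d : {poly F}) (sd : laurent F).
Hypothesis hsd : leq_ls (lmul sd sd) (lpoly d).

Lemma laddE (x y : laurent F) n : ladd x y n = x n + y n. Proof. by []. Qed.
Lemma lrefl (x : laurent F) : leq_ls x x. Proof. by []. Qed.

Lemma lmulDr (x y z : laurent F) : leq_ls (lmul x (ladd y z)) (ladd (lmul x y) (lmul x z)).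
Proof.
move=> n; rewrite lmulC lmulDl !laddE.
by rewrite (lmulC y x) (lmulC z x).
Qed.

Definition nA (x : Aelt F) := x.1 ^+ 2 - x.2 ^+ 2 * d.

Lemma sigma_prod (x : Aelt F) :
  leq_ls (lmul (sigma1 sd x) (sigma2 sd x)) (lpoly (nA x)).
Proof.
move=> n; rewrite /sigma1 /sigma2.
set A := lpoly x.1; set B := lpoly x.2; set B' := lpoly (- x.2).
rewrite lmulDl laddE lmulDr laddE lmulDr laddE.
have e1 : lmul A (lmul B' sd) n = lmul (lpoly (x.1 * - x.2)) sd n.
  by rewrite -lmulA; apply: lmul_congr => // m; exact: lmul_lpoly.
have e2 : lmul (lmul B sd) A n = lmul (lpoly (x.1 * x.2)) sd n.
  by rewrite lmulC -lmulA; apply: lmul_congr => // m; exact: lmul_lpoly.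
have e3 : lmul (lmul B sd) (lmul B' sd) n = lpoly (x.2 * (- x.2 * d)) n.
  rewrite lmulA; transitivity (lmul B (lpoly (- x.2 * d)) n); last exact: lmul_lpoly.
  apply: lmul_congr => // m.
  rewrite -lmulA (lmul_congr (lmulC sd B') (@lrefl sd)) lmulA.
  by rewrite (lmul_congr (@lrefl B') hsd) lmul_lpoly.
have e4 : lmul (lpoly (x.1 * - x.2)) sd n + lmul (lpoly (x.1 * x.2)) sd n = 0.
  rewrite -laddE -lmulDl; apply: lmul0 => i.
  by rewrite laddE -lpolyD mulrN addNr; case: i => i /=; rewrite ?coef0.
rewrite lmul_lpoly e1 e2 e3 -addrA (addrA (lmul _ sd n)) e4 add0r -lpolyD.
by rewrite /nA; congr (lcoef (lpoly _) n); ring.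
Qed.
End Sig.

Section Abs.
Variables (F : finFieldType) (R : realType).
Local Open Scope classical_set_scope.

Lemma qR_gt1 : 1 < qR F R.
Proof.
rewrite /qR ltr1n; apply/card_gt1P; exists 0, 1; split => //.
by rewrite eq_sym oner_eq0.
Qed.

Lemma qR_gt0 : 0 < qR F R.
Proof. exact: lt_trans ltr01 qR_gt1. Qed.

Lemma labs_congr (x y : laurent F) : leq_ls x y -> labs R x = labs R y.
Proof.
move=> h; rewrite /labs; congr sup; congr image.
by apply/funext => n /=; rewrite h.
Qed.

Lemma labs_lpoly (p : {poly F}) :
  labs R (lpoly p) = if p == 0 then 0 else qR F R ^ ((size p).-1)%:Z.
Proof.
rewrite /labs; case: eqP => [->|/eqP p0].
  rewrite (_ : [set n : int | lpoly 0 n != 0] = set0) ?image_set0 ?sup0 //.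
  by apply/funext => -[m|m] /=; rewrite ?coef0 eqxx; apply/propext.
set S := image _ _.
have hS : S (qR F R ^ ((size p).-1)%:Z).
  exists ((size p).-1)%:Z => //=.
  by rewrite -lead_coefE lead_coef_eq0.
have ub : ubound S (qR F R ^ ((size p).-1)%:Z).
  move=> _ [[m|m] /= hm <-]; last by rewrite eqxx in hm.
  rewrite ler_eXz2l ?qR_gt1 // lez_nat.
  case: (leqP m (size p).-1) => // h; move: hm.
  by rewrite nth_default ?eqxx //; move: h; case: (size p).
apply/eqP; rewrite eq_le; apply/andP; split.
  by apply: ge_sup => //; exists (qR F R ^ ((size p).-1)%:Z).
by apply: ub_le_sup => //; exists (qR F R ^ ((size p).-1)%:Z).
Qed.
End Abs.

Section KA.
Local Open Scope quotient_scope.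
Lemma frac_repr (R : idomainType) (x : {fraction R}) :
  x = (\n_(repr x))%:F / (\d_(repr x))%:F.
Proof.
rewrite -[x in LHS]reprK; move: (repr x) => r.
have E : forall a b : {fraction R}, a / b = FracField.mul a (FracField.inv b) by [].
rewrite E; unlock FracField.tofrac.
rewrite -FracField.pi_inv -FracField.pi_mul.
apply/eqmodP; rewrite /= FracField.equivfE /FracField.mulf /FracField.invf /=.
rewrite !numden_Ratio ?mul1r ?mulr1 ?oner_neq0 ?denom_ratioP //.
by rewrite mulrC.
Qed.

Variables (F : finFieldType) (R : realType).

Lemma kabs_frac (a b : {poly F}) : b != 0 ->
  kabs R (a%:F / b%:F) = if a == 0 then 0 else qR F R ^ ((size a)%:Z - (size b)%:Z).
Proof.
move=> b0; rewrite /kabs; set r := repr _.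
have hx := frac_repr (a%:F / b%:F); rewrite -/r in hx.
have d0 : \d_r != 0 by [].
have b0F : b%:F != 0 by rewrite tofrac_eq0.
have d0F : (\d_r)%:F != 0 by rewrite tofrac_eq0.
have e : a * \d_r = \n_r * b.
  apply/eqP; rewrite -tofrac_eq !tofracM; apply/eqP.
  by rewrite -[a%:F](divfK b0F) hx mulrAC divfK.
case: eqP => [n0|/eqP n0].
  move: e; rewrite n0 mul0r => /eqP; rewrite mulf_eq0 (negbTE d0) orbF => /eqP ->.
  by rewrite eqxx.
have a0 : a != 0.
  apply/negP => /eqP a0; move: e; rewrite a0 mul0r => /esym/eqP.
  by rewrite mulf_eq0 (negbTE b0) (negbTE n0).
rewrite (negbTE a0); congr (_ ^ _).
have := congr1 (fun p : {poly F} => size p) e; rewrite /= !size_mul //.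
have := size_poly_gt0 a; have := size_poly_gt0 b.
have := size_poly_gt0 (\n_r); have := size_poly_gt0 (\d_r).
rewrite a0 b0 n0 d0 /=.
move: (size a) (size b) (size \n_r) (size \d_r) => A B Nn D.
move=> h1 h2 h3 h4; rewrite -!subn1 => h5; lia.
Qed.
End KA.



Section Deg.
Variables (F : finFieldType) (R : realType).
Local Notation Q := (qR F R).

Lemma deg_bound (se sn g : int) :
  Q ^ (se - sn) < Q ^ (- g) / Num.sqrt (Q ^ (sn - 1)) -> 2 * se < sn - 2 * g + 1.
Proof.
have Q1 := @qR_gt1 F R; have Q0 := @qR_gt0 F R.
have Qn0 : Q != 0 by rewrite gt_eqF.
set s := Num.sqrt _; have s0 : 0 < s by rewrite sqrtr_gt0 exprz_gt0.
rewrite ltr_pdivlMr // => h.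
have h2 : (Q ^ (se - sn) * s) * (Q ^ (se - sn) * s) < Q ^ (- g) * Q ^ (- g).
  by apply: ltr_pM => //; rewrite mulr_ge0 // ?exprz_ge0 ?ltW.
rewrite mulrACA -(expr2 s) sqr_sqrtr ?exprz_ge0 ?ltW // -!expfzDr // in h2.
rewrite ltr_eXz2l // in h2; lia.
Qed.
End Deg.

Section Alg.
Variables (F : finFieldType) (d : {poly F}).
Hypotheses (sq : sqfree_poly d) (sd1 : (1 < size d)%N).

Lemma nA_eq0 (m : Aelt F) : nA d m = 0 -> m = (0, 0).
Proof.
case: m => m1 m2; rewrite /nA /= => /eqP; rewrite subr_eq0 => /eqP e.
have [m20|m20] := eqVneq m2 0.
  move: e; rewrite m20 expr0n mul0r => /eqP; rewrite expf_eq0 /= => /eqP ->.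
  by [].
exfalso.
set g := gcdp m1 m2.
have g0 : g != 0 by rewrite gcdp_eq0 negb_and m20 orbT.
set a := m1 %/ g; set b := m2 %/ g.
have ea : m1 = a * g by rewrite divpK // dvdp_gcdl.
have eb : m2 = b * g by rewrite divpK // dvdp_gcdr.
have cop : coprimep a b by apply: coprimep_div_gcd; rewrite m20 orbT.
have e2 : a ^+ 2 = b ^+ 2 * d.
  apply: (mulIf (expf_neq0 2 g0)); move: e; rewrite ea eb !exprMn.
  by move=> ->; rewrite mulrAC.
have dv : b ^+ 2 %| a ^+ 2 by rewrite e2 dvdp_mulr.
have cop2 : coprimep (b ^+ 2) (a ^+ 2).
  by rewrite coprimep_expl // coprimep_expr // coprimep_sym.
have := coprimep_dvdl dv cop2; rewrite coprimep_def gcdpp.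
case/size_poly1P => c c0 ec.
have dv2 : a ^+ 2 %| d.
  have -> : d = c^-1%:P * a ^+ 2 by rewrite e2 ec mulrA -polyCM mulVf // mul1r.
  exact: dvdp_mull.
have := sq dv2 => sa.
have : (size (a ^+ 2) <= 1)%N.
  by rewrite expr2; apply: leq_trans (size_polyMleq _ _) _; case: (size a) sa => [|[|]].
by rewrite e2 ec mul_polyC size_scale // leqNgt sd1.
Qed.

Definition Aone : Aelt F := (1, 0).
Lemma AmulC (x y : Aelt F) : Amul d x y = Amul d y x.
Proof. by rewrite /Amul; congr pair; ring. Qed.
Lemma AmulA (x y z : Aelt F) : Amul d x (Amul d y z) = Amul d (Amul d x y) z.
Proof. by rewrite /Amul /=; congr pair; ring. Qed.
Lemma AmulDr (x y z : Aelt F) : Amul d x (Aadd y z) = Aadd (Amul d x y) (Amul d x z).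
Proof. by rewrite /Amul /Aadd /=; congr pair; ring. Qed.
Lemma Amul1 (x : Aelt F) : Amul d x Aone = x.
Proof. by case: x => x1 x2; rewrite /Amul /=; congr pair; ring. Qed.
Lemma nAM (x y : Aelt F) : nA d (Amul d x y) = nA d x * nA d y.
Proof. by rewrite /nA /Amul /=; ring. Qed.
End Alg.

Section Theta.
Variables (F : finFieldType) (R : realType) (d : {poly F}).
Local Notation Q := (qR F R).

Lemma theta_eq (k z w : Aelt F) : nA d w != 0 ->
  let P := Amul d k (Amul d z (w.1, - w.2)) in
  KRe (Kmul d (AtoK k) (Kdiv d (AtoK z) (AtoK w))) = P.1%:F / (nA d w)%:F /\
  KIm (Kmul d (AtoK k) (Kdiv d (AtoK z) (AtoK w))) = P.2%:F / (nA d w)%:F.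
Proof.
move=> n0 P; have nF : (nA d w)%:F != 0 by rewrite tofrac_eq0.
move: nF; rewrite /P /KRe /KIm /Kmul /Kdiv /Kinv /AtoK /nA /Amul /=.
rewrite !(tofracD, tofracM, tofracN, tofracB, tofracXn) => nF.
move: ((k.1)%:F) ((k.2)%:F) ((z.1)%:F) ((z.2)%:F) ((w.1)%:F) ((w.2)%:F) (d%:F) nF.
move=> k1 k2 z1 z2 w1 w2 D nF.
rewrite -!expr2; move: (w1 ^+ 2 - w2 ^+ 2 * D) => N.
split; ring.
Qed.

Lemma kdist_lt (P n : {poly F}) (t : R) : n != 0 ->
  kdist R (P%:F / n%:F) < t ->
  exists r : {poly F}, P - r * n = 0 \/ Q ^ ((size (P - r * n))%:Z - (size n)%:Z) < t.
Proof.
move=> n0 /inf_lt [].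
  by exists (kabs R (P%:F / n%:F - 0%:F)); exists 0.
move=> _ [r _ <-] h; exists r; move: h.
have nF : n%:F != 0 by rewrite tofrac_eq0.
have -> : P%:F / n%:F - r%:F = (P - r * n)%:F / n%:F.
  by rewrite tofracB tofracM mulrBl mulfK.
rewrite kabs_frac //; case: eqP => [->|_]; by [left|right].
Qed.
End Theta.


Lemma size_nA_lt (F : fieldType) (d e1 e2 : {poly F}) (sn : nat) :
  (0 < sn)%N ->
  (size e1 = 0 \/ 2 * size e1 < sn - 2 * size d + 1)%N ->
  (size e2 = 0 \/ 2 * size e2 < sn - 2 * size d + 1)%N ->
  (size (e1 ^+ 2 - e2 ^+ 2 * d)%R < sn)%N.
Proof.
move=> sn0 b1 b2.
apply: leq_ltn_trans (size_polyD _ _) _; rewrite size_polyN gtn_max.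
have s1 := size_polyMleq e1 e1; rewrite -expr2 -subn1 in s1.
apply/andP; split; first lia.
have [h0|hne] := eqVneq (size e2) 0%N.
  by move/eqP: h0; rewrite size_poly_eq0 => /eqP ->; rewrite expr0n mul0r size_poly0.
case: b2 => h; first by rewrite h eqxx in hne.
have s2 := size_polyMleq e2 e2; have s3 := size_polyMleq (e2 ^+ 2) d.
rewrite -expr2 -subn1 in s2; rewrite -subn1 in s3.
have s4 : (size (e2 ^+ 2 * d)%R <= size e2 + size e2 - 1 + size d - 1)%N.
  apply: leq_trans s3 _; lia.
move: hne; rewrite -lt0n => hne. clear s3 s2 s1 b1. move: (size (e2 ^+ 2 * d)%R) (size e2) (size d) s4 h hne => A B C. lia.
Qed.


Lemma AmulDl (F : finFieldType) (d : {poly F}) (x y z : Aelt F) :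
  Amul d (Aadd x y) z = Aadd (Amul d x z) (Amul d y z).
Proof. by rewrite /Amul /Aadd /=; congr pair; ring. Qed.

Lemma Amul1' (F : finFieldType) (d : {poly F}) (x : Aelt F) : Amul d x (1, 0) = x.
Proof. exact: Amul1. Qed.

End Aux.
Import Aux.

Theorem mainTheorem11 (F : finFieldType) (R : realType) (d : {poly F})
  (sd : laurent F) (c : R) :
  odd #|F| ->
  d \is monic -> sqfree_poly d -> ~~ odd (size d).-1 -> (1 < size d)%N ->
  leq_ls (lmul sd sd) (lpoly d) ->
  1 <= c ->
  exists c' : R, 0 < c' /\
    forall w z : Aelt F,
      w != (0, 0) -> Acoprime d w z ->
      let theta := Kdiv d (AtoK z) (AtoK w) in
      let W := Anorm R sd w in
      (forall i : 'I_2,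
         c^-1 * Num.sqrt W <= labs R (sigma sd i w) <= c * Num.sqrt W) ->
      forall k : Aelt F,
        0 < Anorm R sd k < W ->
        c' / Num.sqrt W <=
          Num.max (kdist R (KRe (Kmul d (AtoK k) theta)))
                  (kdist R (KIm (Kmul d (AtoK k) theta))).
Proof.
move=> _ _ sq _ sd1 hsd _.
have Q1 := @qR_gt1 F R; have Q0 := @qR_gt0 F R.
exists (qR F R ^ (- (size d)%:Z)); split; first exact: exprz_gt0.
move=> w z _ [u [v cuv]] theta W _ k /andP[hk0 hkW].
have AnE x : Anorm R sd x = if nA d x == 0 then 0 else qR F R ^ ((size (nA d x)).-1)%:Z.
  by rewrite /Anorm (labs_congr R (sigma_prod hsd x)) labs_lpoly.
set n := nA d w.
have n0 : n != 0.
  apply/negP => /eqP n0; move: (lt_trans hk0 hkW); rewrite /W AnE -/n n0 eqxx ltxx //.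
have k0 : nA d k != 0.
  by apply/negP => /eqP k0; move: hk0; rewrite AnE k0 eqxx ltxx.
have sn0 : (0 < size n)%N by rewrite size_poly_gt0.
have hs : ((size n).-1)%:Z = (size n)%:Z - 1 by lia.
rewrite leNgt; apply/negP; rewrite gt_max => /andP[h1 h2].
have [hre him] := theta_eq k z n0.
rewrite /theta hre /W AnE -/n (negbTE n0) hs in h1.
rewrite /theta him /W AnE -/n (negbTE n0) hs in h2.
set P := Amul d k (Amul d z (w.1, - w.2)) in h1 h2.
have [r1 hr1] := kdist_lt n0 h1; have [r2 hr2] := kdist_lt n0 h2.
set e1 := P.1 - r1 * n in hr1; set e2 := P.2 - r2 * n in hr2.
have b1 : (size e1 = 0 \/ 2 * size e1 < size n - 2 * size d + 1)%N.
  case: hr1 => [->|/deg_bound]; [by left; rewrite size_poly0|move=> h; right; move: h; move: (size e1) (size n) (size d) => A B C; clear - A B C; lia].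
have b2 : (size e2 = 0 \/ 2 * size e2 < size n - 2 * size d + 1)%N.
  case: hr2 => [->|/deg_bound]; [by left; rewrite size_poly0|move=> h; right; move: h; move: (size e2) (size n) (size d) => A B C; clear - A B C; lia].
set r : Aelt F := (r1, r2); set e : Aelt F := (e1, e2).
set m : Aelt F := ((Amul d k z).1 - (Amul d r w).1, (Amul d k z).2 - (Amul d r w).2).
have ide : Amul d e w = (n * m.1, n * m.2).
  by rewrite /e /e1 /e2 /m /P /r /n /nA /Amul /=; congr pair; ring.
have hn : nA d e = n * nA d m.
  apply: (mulIf n0); rewrite -nAM ide /nA /=; ring.
have m0 : m = (0, 0).
  apply: (nA_eq0 sq sd1); apply/eqP; have [//|hm] := eqVneq (nA d m) 0; exfalso.
  have : (size (nA d e) < size n)%N.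
    by rewrite /nA /=; apply: size_nA_lt.
  rewrite hn size_mul //; have := size_poly_gt0 (nA d m); rewrite hm.
  move: (size n) (size (nA d m)) => A B; clear - A B; lia.
have hkz : Amul d k z = Amul d r w.
  move: m0; rewrite /m; case: (Amul d k z) => a1 a2; case: (Amul d r w) => b1' b2' /=.
  by case=> /eqP; rewrite subr_eq0 => /eqP -> /eqP; rewrite subr_eq0 => /eqP ->.
set mm := Aadd (Amul d k u) (Amul d v r).
have hk : k = Amul d mm w.
  rewrite -{1}(@Amul1' _ d k) -cuv AmulDr /mm AmulDl; congr Aadd; first by rewrite AmulA.
  by rewrite AmulA (AmulC d k v) -AmulA hkz AmulA.
have nk : nA d k = nA d mm * n by rewrite {1}hk nAM.
have mm0 : nA d mm != 0 by apply/negP => /eqP h; move: k0; rewrite nk h mul0r eqxx.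
move: hkW; rewrite /W !AnE -/n (negbTE n0) (negbTE k0) ltr_eXz2l // nk size_mul //.
have := size_poly_gt0 (nA d mm); rewrite mm0.
move: (size n) (size (nA d mm)) sn0 => A B; clear - A B; lia.
Qed.
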